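(* Let $\Gamma$ be a finite group and $\mathbf{E}=\bigoplus_{w\in\Gamma}\mathbf{E}_w$ a finite-dimensional associative $\bar{\mathbb{Q}}_l$-algebra with $1$, with $\dim\mathbf{E}_w=1$ and $\mathbf{E}_w\mathbf{E}_y=\mathbf{E}_{wy}$; choose basis elements $b_w\in\mathbf{E}_w$. Let $\iota:\mathbf{E}\to\mathbf{E}$ be an algebra automorphism. Let $V_1,\dots,V_{r'}$ be representatives of the isomorphism classes of simple $\mathbf{E}$-modules, numbered so that exactly for $i\in[1,r]$ there exists a $\bar{\mathbb{Q}}_l$-linear isomorphism $\iota_i:V_i\to V_i$ with $\iota_i(ev)=\iota(e)\iota_i(v)$ for all $e\in\mathbf{E}$, $v\in V_i$; fix such $\iota_i$ for $i\in[1,r]$. Then for any $w,w'\in\Gamma$, $\sum_{i=1}^r\mathrm{tr}(b_w\iota_i,V_i)\,\mathrm{tr}(\iota_i^{-1}b_{w'}^{-1},V_i)$ equals the trace of the linear map $\kappa:\mathbf{E}\to\mathbf{E}$, $e\mapsto b_{w'}^{-1}\iota^{-1}(e)b_w$. *)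

(* Defs.v *)
From HB Require Import structures.
From mathcomp Require Import all_boot all_order all_algebra all_fingroup all_field.
Set Implicit Arguments. Unset Strict Implicit. Unset Printing Implicit Defensive.
Import GRing.Theory.
Local Open Scope ring_scope.

Definition vtrace (F : fieldType) (V : vectType F) (f : 'End(V)) : F :=
  \tr (passmx.mxof (vbasis {:V}) (vbasis {:V}) f).

Record Emod (F : fieldType) (E : falgType F) := EMod {
  mcarrier :> vectType F;
  Eact : E -> 'End(mcarrier)
}.

Definition is_Emod (F : fieldType) (E : falgType F) (M : Emod E) : Prop :=
  [/\ linear (@Eact F E M),
      Eact M 1 = \1%VF &
      forall x y, Eact M (x * y) = (Eact M x \o Eact M y)%VF].

Definition simple_Emod (F : fieldType) (E : falgType F) (M : Emod E) : Prop :=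
  [/\ is_Emod M,
      (0 < \dim (fullv : {vspace M}))%N &
      forall U : {vspace M}, (forall e, (Eact M e @: U <= U)%VS) ->
         U = 0%VS \/ U = fullv].

Definition lbij (F : fieldType) (V W : vectType F) (f : 'Hom(V, W)) : Prop :=
  lker f = 0%VS /\ limg f = fullv.

Definition Emod_iso (F : fieldType) (E : falgType F) (M N : Emod E) : Prop :=
  exists f : 'Hom(M, N), lbij f /\
    forall e, (f \o Eact M e)%VF = (Eact N e \o f)%VF.

Definition twisting (F : fieldType) (E : falgType F) (iota : E -> E)
    (M : Emod E) (j : 'End(M)) : Prop :=
  lbij j /\ forall e, (j \o Eact M e)%VF = (Eact M (iota e) \o j)%VF.

(* Main.v *)
Require Import Defs.
From HB Require Import structures.
From mathcomp Require Import all_boot all_order all_algebra all_fingroup all_field.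
From mathcomp Require Import zify ring.
From Stdlib Require Import Classical.
Import GRing.Theory.
Local Open Scope ring_scope.

Module H.
Set Implicit Arguments. Unset Strict Implicit. Unset Printing Implicit Defensive.

Set Implicit Arguments.

Section LinHelp.
Variables (K : fieldType) (U W : lmodType K).

Lemma linD' (f : U -> W) : linear f -> forall x y, f (x + y) = f x + f y.
Proof.
move=> fL x y.
pose ff : {linear U -> W} := HB.pack f (GRing.isSemilinear.Build _ _ _ _ f (GRing.semilinear_linear fL)).
exact: (raddfD ff).
Qed.
Lemma linZ' (f : U -> W) : linear f -> forall a x, f (a *: x) = a *: f x.
Proof.
move=> fL a x.
pose ff : {linear U -> W} := HB.pack f (GRing.isSemilinear.Build _ _ _ _ f (GRing.semilinear_linear fL)).
exact: (linearZZ ff).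
Qed.
Lemma lin0' (f : U -> W) : linear f -> f 0 = 0.
Proof.
move=> fL.
pose ff : {linear U -> W} := HB.pack f (GRing.isSemilinear.Build _ _ _ _ f (GRing.semilinear_linear fL)).
exact: (linear0 ff).
Qed.
Lemma lin_sum' (f : U -> W) I (r : seq I) (P : pred I) (F : I -> U) : linear f ->
  f (\sum_(i <- r | P i) F i) = \sum_(i <- r | P i) f (F i).
Proof.
move=> fL.
pose ff : {linear U -> W} := HB.pack f (GRing.isSemilinear.Build _ _ _ _ f (GRing.semilinear_linear fL)).
exact: (linear_sum ff).
Qed.
End LinHelp.

Lemma linfunE' (K : fieldType) (aT rT : vectType K) (f : aT -> rT) :
  linear f -> linfun f =1 f.
Proof.
move=> fL.
pose ff : {linear aT -> rT} := HB.pack f (GRing.isSemilinear.Build _ _ _ _ f (GRing.semilinear_linear fL)).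
exact: (lfunE ff).
Qed.

Set Implicit Arguments.

Import passmx.
Section Trace.
Variables (F : fieldType) (V : vectType F).

Lemma vtraceE (f : 'End(V)) : vtrace f =
  \sum_(i < \dim {:V}) coord (vbasis {:V}) i (f (vbasis {:V})`_i).
Proof.
rewrite /vtrace /mxtrace; apply: eq_bigr => i _.
by rewrite /passmx.mxof !mxE /= passmx.vecof_delta.
Qed.

Lemma vtrace_comp (f g : 'End(V)) : vtrace (f \o g)%VF = vtrace (g \o f)%VF.
Proof. by rewrite /vtrace !(passmx.mxof_comp _ _ (vbasisP _)) mxtrace_mulC. Qed.

Lemma vtraceD (f g : 'End(V)) : vtrace (f + g) = vtrace f + vtrace g.
Proof. by rewrite /vtrace (raddfD (passmx.mxof _ _)) mxtraceD. Qed.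

Lemma vtraceZ a (f : 'End(V)) : vtrace (a *: f) = a * vtrace f.
Proof. by rewrite /vtrace linearZ mxtraceZ. Qed.

Lemma vtrace0 : vtrace (0 : 'End(V)) = 0.
Proof. by rewrite /vtrace linear0 mxtrace0. Qed.

Lemma vtrace_sum I (r : seq I) (P : pred I) (G : I -> 'End(V)) :
  vtrace (\sum_(i <- r | P i) G i) = \sum_(i <- r | P i) vtrace (G i).
Proof.
by apply: (big_morph _ vtraceD vtrace0).
Qed.

Lemma vtrace1 : vtrace (\1%VF : 'End(V)) = (\dim {:V})%:R.
Proof. by rewrite /vtrace passmx.mxof1 ?(basis_free (vbasisP _)) // mxtrace1. Qed.

Lemma vtrace_frame (I : finType) (x : I -> V) (phi : I -> V -> F)
  (phiD : forall i u v, phi i (u + v) = phi i u + phi i v)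
  (phiZ : forall i a u, phi i (a *: u) = a * phi i u)
  (fr : forall v, \sum_i phi i v *: x i = v) (f : 'End(V)) :
  vtrace f = \sum_i phi i (f (x i)).
Proof.
have phi0 i : phi i 0 = 0 by rewrite -(scale0r 0) phiZ mul0r.
have phiS i J (r : seq J) (G : J -> V) :
    phi i (\sum_(j <- r) G j) = \sum_(j <- r) phi i (G j).
  by apply: (big_morph _ (phiD i) (phi0 i)).
rewrite vtraceE.
transitivity (\sum_(k < \dim {:V}) \sum_i coord (vbasis {:V}) k (x i) *
               phi i (f (vbasis {:V})`_k)).
  apply: eq_bigr => k _.
  rewrite -{1}[f _]fr linear_sum; apply: eq_bigr => i _.
  by rewrite linearZ /= mulrC.
rewrite exchange_big; apply: eq_bigr => i _.
rewrite {2}[x i](coord_vbasis (memvf _)) linear_sum phiS.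
by apply: eq_bigr => k _; rewrite linearZ phiZ.
Qed.

End Trace.

Set Implicit Arguments.
Import passmx.

Definition stab_simple (F : fieldType) (E : Type) (M : vectType F)
  (al : E -> 'End(M)) :=
  forall U : {vspace M}, (forall e, (al e @: U <= U)%VS) -> U = 0%VS \/ U = fullv.

Section Schur.
Variables (F : fieldType) (E : Type) (M N : vectType F).

Lemma schur (al : E -> 'End(M)) (be : E -> 'End(N))
  (sa : stab_simple al) (sb : stab_simple be) (Q : 'Hom(M, N))
  (hQ : forall e, (be e \o Q = Q \o al e)%VF) : Q = 0 \/ lbij Q.
Proof.
have stK : forall e, (al e @: lker Q <= lker Q)%VS.
  move=> e; apply/subvP => _ /memv_imgP [v vK ->].
  rewrite memv_ker -comp_lfunE -hQ comp_lfunE.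
  by rewrite memv_ker in vK; rewrite (eqP vK) linear0.
have stI : forall e, (be e @: limg Q <= limg Q)%VS.
  move=> e; apply/subvP => _ /memv_imgP [_ /memv_imgP [v _ ->] ->].
  by rewrite -comp_lfunE hQ comp_lfunE memv_img ?memvf.
have [kQ|kQ] := sa (lker Q) stK.
- have [iQ|iQ] := sb (limg Q) stI.
  + left; apply/lfunP => v; rewrite zero_lfunE.
    by apply/eqP; rewrite -memv0 -iQ memv_img ?memvf.
  + by right; split.
- left; apply/lfunP => v; rewrite zero_lfunE.
  by apply/eqP; rewrite -memv_ker kQ memvf.
Qed.
End Schur.

Section Eigen.
Variables (F : closedFieldType) (V : vectType F).

Lemma eigen_exists (Q : 'End(V)) : (0 < \dim {:V})%N ->
  exists a, exists2 v, v != 0 & Q v = a *: v.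
Proof.
move=> dpos.
pose A := mxof (vbasis {:V}) (vbasis {:V}) Q.
have : size (char_poly A) != 1%N by rewrite size_char_poly; case: (\dim {:V}) dpos.
case/closed_rootP => a ra.
have /eigenvalueP [w wA wnz] : eigenvalue A a by rewrite eigenvalue_root_char.
exists a; exists (vecof (vbasis {:V}) w).
  by rewrite vecof_eq0 ?vbasisP.
by rewrite (hom_vecof _ (vbasisP _)) wA linearZ.
Qed.

Lemma schur_scalar (E : Type) (al : E -> 'End(V)) (sa : stab_simple al)
  (dpos : (0 < \dim {:V})%N) (Q : 'End(V))
  (hQ : forall e, (al e \o Q = Q \o al e)%VF) : exists a, Q = a *: \1%VF.
Proof.
have [a [v vnz Qv]] := eigen_exists Q dpos.
exists a.
have hQ' : forall e, (al e \o (Q - a *: \1%VF) = (Q - a *: \1%VF) \o al e)%VF.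
  move=> e; rewrite comp_lfunDr comp_lfunDl comp_lfunNr comp_lfunNl.
  by rewrite -!comp_lfunZr -!comp_lfunZl comp_lfun1l comp_lfun1r hQ.
have [Q0|[kQ _]] := schur sa sa hQ'.
- by apply/eqP; rewrite -subr_eq0 Q0.
- have : v \in lker (Q - a *: \1%VF).
    by rewrite memv_ker add_lfunE opp_lfunE scale_lfunE id_lfunE Qv subrr.
  by rewrite kQ memv0 (negPf vnz).
Qed.
End Eigen.

Set Implicit Arguments.

Lemma line_coord (F : fieldType) (V : vectType F) (u v : V) :
  v \in <[u]>%VS -> v = coord [tuple u] ord0 v *: u.
Proof. by rewrite -span_seq1 => hv; rewrite {1}(@coord_span _ _ 1 [tuple u] v hv) big_ord1. Qed.

Section Comp.
Variables (F : fieldType) (U V W : vectType F).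
Lemma comp_sumr (f : 'Hom(V, W)) I (r : seq I) (P : pred I) (G : I -> 'Hom(U, V)) :
  (f \o \sum_(i <- r | P i) G i = \sum_(i <- r | P i) (f \o G i))%VF.
Proof. by elim/big_rec2: _ => [|i x y _ <-]; rewrite ?comp_lfun0r ?comp_lfunDr. Qed.
Lemma comp_suml (g : 'Hom(U, V)) I (r : seq I) (P : pred I) (G : I -> 'Hom(V, W)) :
  ((\sum_(i <- r | P i) G i) \o g = \sum_(i <- r | P i) (G i \o g))%VF.
Proof. by elim/big_rec2: _ => [|i x y _ <-]; rewrite ?comp_lfun0l ?comp_lfunDl. Qed.
End Comp.

Section Grade.
Variables (F : fieldType) (gT : finGroupType) (E : falgType F)
  (Ew : gT -> {vspace E})
  (dimEw : forall w, \dim (Ew w) = 1%N)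
  (sumEw : (\sum_(w : gT) Ew w)%VS = fullv)
  (mulEw : forall w y, (Ew w * Ew y)%VS = Ew (w * y)%g)
  (b : gT -> E) (bE : forall w, b w \in Ew w) (bnz : forall w, b w != 0).

Lemma Ew_line w : Ew w = <[b w]>%VS.
Proof. by apply/eqP; rewrite eq_sym eqEdim -memvE bE dimEw dim_vline bnz. Qed.

Lemma span_b e : exists c : gT -> F, e = \sum_w c w *: b w.
Proof.
have : e \in (\sum_w Ew w)%VS by rewrite sumEw memvf.
case/memv_sumP => v vE ->.
exists (fun w => coord [tuple b w] ord0 (v w)).
by apply: eq_bigr => w _; rewrite -line_coord // -Ew_line vE.
Qed.

Lemma b_mul z y : exists2 c, c != 0 & b z * b y = c *: b (z * y)%g.
Proof.
have : b z * b y \in Ew (z * y)%g by rewrite -mulEw memv_mul.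
rewrite Ew_line => /vlineP [c hc]; exists c => //.
apply: contraTneq isT => c0.
have : \dim <[b z * b y]> = 1%N by rewrite -prodv_line -!Ew_line mulEw dimEw.
by rewrite hc c0 scale0r dim_vline eqxx.
Qed.

Lemma one_b1 : exists2 m, m != 0 & b 1%g = m *: 1.
Proof.
have [m mnz hm] := b_mul 1%g 1%g; rewrite mulg1 in hm.
have key w : b 1%g * b w = m *: b w.
  have [c cnz hc] := b_mul 1%g w; rewrite mul1g in hc.
  have : b 1%g * (b 1%g * b w) = (b 1%g * b 1%g) * b w by rewrite mulrA.
  rewrite {1}hc hm -scalerAr hc -scalerAl hc !scalerA => /eqP.
  rewrite -subr_eq0 -scalerBl scaler_eq0 (negPf (bnz w)) orbF subr_eq0.
  rewrite mulrC => /eqP /(mulIf cnz) ->; done.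
exists m => //.
have gen e : b 1%g * e = m *: e.
  have [c ->] := span_b e.
  rewrite mulr_sumr scaler_sumr; apply: eq_bigr => w _.
  by rewrite -scalerAr key scalerA scalerA mulrC.
by have := gen 1; rewrite mulr1.
Qed.

Lemma b_unit y : b y \is a GRing.unit.
Proof.
have [m mnz hm] := one_b1.
have [c cnz hc] := b_mul y y^-1%g; rewrite mulgV hm scalerA in hc.
have [c' cnz' hc'] := b_mul y^-1%g y; rewrite mulVg hm scalerA in hc'.
have ec : c * m = c' * m.
  have : b y * (b y^-1%g * b y) = (b y * b y^-1%g) * b y by rewrite mulrA.
  rewrite hc hc' -scalerAr -scalerAl mulr1 mul1r => /eqP.
  by rewrite -subr_eq0 -scalerBl scaler_eq0 (negPf (bnz y)) orbF subr_eq0 => /eqP.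
have cm0 : c * m != 0 by rewrite mulf_neq0.
apply/GRing.unitrP; exists ((c * m)^-1 *: b y^-1%g); split.
  by rewrite -scalerAl hc' -ec scalerA mulVf // scale1r.
by rewrite -(scalerAr _ (b y)) hc scalerA mulVf // scale1r.
Qed.

Section Av.
Variables (M N : vectType F) (al : E -> 'End(M)) (be : E -> 'End(N))
  (alL : linear al) (beL : linear be)
  (alM : forall x y, al (x * y) = (al x \o al y)%VF)
  (beM : forall x y, be (x * y) = (be x \o be y)%VF).

Definition Av (g : 'Hom(M, N)) : 'Hom(M, N) :=
  \sum_y (be (b y) \o g \o al ((b y)^-1)%R)%VF.

Lemma Av_hom g e : (be e \o Av g = Av g \o al e)%VF.
Proof.
suff key z : (be (b z) \o Av g = Av g \o al (b z))%VF.
  have [c ->] := span_b e.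
  rewrite (lin_sum' _ _ _ beL) (lin_sum' _ _ _ alL) comp_suml comp_sumr.
  apply: eq_bigr => z _.
  by rewrite (linZ' beL) (linZ' alL) -comp_lfunZl -comp_lfunZr key.
rewrite comp_sumr comp_suml [in RHS](reindex_inj (mulgI z)) /=.
apply: eq_bigr => y _.
have [c cnz hc] := b_mul z y.
have -> : (b y)^-1 = c^-1 *: ((b (z * y)%g)^-1 * b z).
  have hzy : b (z * y)%g = c^-1 *: (b z * b y) by rewrite hc scalerA mulVf // scale1r.
  have u1 : c^-1 \is a GRing.unit by rewrite unitfE invr_neq0.
  have u2 : b z * b y \is a GRing.unit by rewrite unitrMl b_unit.
  rewrite hzy invrZ // invrM ?b_unit // invrK.
  by rewrite -scalerAl scalerA mulVf // scale1r -mulrA mulVr ?b_unit // mulr1.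
rewrite (linZ' alL) alM !comp_lfunA -beM hc (linZ' beL).
by rewrite -comp_lfunZr -!comp_lfunZl scalerA mulVf // scale1r !comp_lfunA.
Qed.
End Av.
End Grade.

Set Implicit Arguments.

Section SubMod.
Variables (F : fieldType) (E : falgType F) (S : {vspace E}).
Hypothesis stS : forall e v, v \in S -> e * v \in S.

Definition subAct (e : E) : 'End(subvs_of S) :=
  (linfun (@vsproj _ _ S) \o amull e \o linfun vsval)%VF.

Lemma subActE e v : subAct e v = vsproj S (e * vsval v).
Proof. rewrite /subAct !comp_lfunE (lfunE (vsproj S)) (lfunE vsval). rewrite /amull lfunE /=. done. Qed.

Definition subMod : Emod E := EMod (subAct).

Lemma subMod_is : is_Emod subMod.
Proof.
split => /=.
- move=> a e1 e2; apply/lfunP => v.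
  by rewrite add_lfunE scale_lfunE !subActE mulrDl -scalerAl linearP.
- by apply/lfunP => v; rewrite id_lfunE subActE mul1r vsvalK.
- move=> x y; apply/lfunP => v; rewrite comp_lfunE !subActE.
  by rewrite vsprojK ?mulrA // stS // subvsP.
Qed.

Lemma subMod_simple :
  S != 0%VS ->
  (forall U : {vspace E}, (forall e v, v \in U -> e * v \in U) -> (U <= S)%VS -> U = 0%VS \/ U = S) ->
  simple_Emod subMod.
Proof.
move=> Snz minS; split; first exact: subMod_is.
  by rewrite dimvf /= lt0n dimv_eq0.
move=> U stU.
pose U' : {vspace E} := lfun_img (linfun (@vsval _ _ S)) (U : {vspace subvs_of S}).
have stU' : forall e v, v \in U' -> e * v \in U'.
  move=> e _ /memv_imgP [u uU ->]; rewrite lfunE /=.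
  have -> : e * vsval u = vsval (subAct e u) by rewrite subActE vsprojK // stS // subvsP.
  rewrite -[vsval (subAct e u)](lfunE vsval) memv_img //.
  exact: (subvP (stU e)) _ (memv_img (subAct e) uU).
have sUS : (U' <= S)%VS.
  by apply/subvP => _ /memv_imgP [u _ ->]; rewrite lfunE subvsP.
have kv : lker (linfun (@vsval _ _ S)) == 0%VS.
  by apply/lker0P => u1 u2; rewrite !lfunE /=; apply: subvs_inj.
have [U'0|U'S] := minS U' stU' sUS.
- left; apply/eqP; rewrite -subv0; apply/subvP => u uU; rewrite memv0.
  have : linfun (@vsval _ _ S) u \in U' by rewrite memv_img.
  rewrite U'0 memv0 lfunE /= => /eqP h; apply/eqP; apply: subvs_inj; rewrite h.
  by rewrite linear0.
- right; apply/eqP; rewrite eqEdim subvf /= dimvf.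
  have hd : \dim U' = \dim U by apply: limg_dim_eq; rewrite (eqP kv) capv0.
  by rewrite -hd U'S.
Qed.

End SubMod.

Set Implicit Arguments.

Section Inj.
Variables (F : fieldType) (gT : finGroupType) (E : falgType F)
  (Ew : gT -> {vspace E})
  (dimEw : forall w, \dim (Ew w) = 1%N)
  (sumEw : (\sum_(w : gT) Ew w)%VS = fullv)
  (mulEw : forall w y, (Ew w * Ew y)%VS = Ew (w * y)%g)
  (b : gT -> E) (bE : forall w, b w \in Ew w) (bnz : forall w, b w != 0)
  (nnz : #|gT|%:R != 0 :> F).

Definition stableE (U : {vspace E}) := forall e v, v \in U -> e * v \in U.
Definition minimalE (S : {vspace E}) :=
  forall U, stableE U -> (U <= S)%VS -> U = 0%VS \/ U = S.

Lemma minimal_exists (C : {vspace E}) : stableE C -> C != 0%VS ->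
  exists S, [/\ stableE S, S != 0%VS, (S <= C)%VS & minimalE S].
Proof.
have [k] := ubnP (\dim C); elim: k C => // k IH C hk stC Cnz.
case: (classic (minimalE C)) => [mC|nmC]; first by exists C.
have [U hU] := not_all_ex_not _ _ nmC.
have [stU hU2] := imply_to_and _ _ hU.
have [sUC hU3] := imply_to_and _ _ hU2.
have [Unz UnC] := not_or_and _ _ hU3.
have Unz' : U != 0%VS by apply/eqP.
have ltUC : (\dim U < \dim C)%N.
  rewrite ltnNge; apply/negP => h; apply: UnC; apply/eqP.
  by rewrite eqEdim sUC h.
have [S [stS Snz sSU mS]] := IH U (leq_trans ltUC hk) stU Unz'.
by exists S; split => //; apply: subv_trans sUC.
Qed.

Definition Lm (e : E) : 'End(E) := amull e.
Lemma LmL : linear Lm. Proof. exact: amull_is_linear. Qed.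
Lemma LmM x y : Lm (x * y) = (Lm x \o Lm y)%VF.
Proof. by apply/lfunP => v; rewrite comp_lfunE !lfunE /= mulrA. Qed.

Lemma complement (W : {vspace E}) : stableE W -> W != fullv ->
  exists C, [/\ stableE C, C != 0%VS & (W :&: C = 0)%VS].
Proof.
move=> stW WnF.
pose pi := Av b Lm Lm (projv W).
have hom e : (Lm e \o pi = pi \o Lm e)%VF.
  exact: (Av_hom dimEw sumEw mulEw bE bnz LmL LmL LmM LmM).
have piE v : pi v = \sum_y b y * projv W ((b y)^-1 * v).
  by rewrite /pi /Av sum_lfunE; apply: eq_bigr => y _; rewrite !comp_lfunE !lfunE.
have piW w : w \in W -> pi w = #|gT|%:R *: w.
  move=> wW; rewrite piE.
  rewrite (eq_bigr (fun _ => w)); first by rewrite sumr_const scaler_nat.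
  by move=> y _; rewrite projv_id ?mulVKr ?(b_unit dimEw sumEw mulEw bE bnz) // stW.
have piI v : pi v \in W.
  by rewrite piE; apply: memv_suml => y _; apply: stW; apply: memv_proj.
exists (lker pi); split.
- move=> e v; rewrite !memv_ker => /eqP pv.
  have /lfunP /(_ v) := hom e; rewrite !comp_lfunE !lfunE /= pv mulr0.
  by move=> <-.
- apply/negP => /eqP k0.
  have := limg_ker_dim pi fullv; rewrite capfv k0 dimv0 add0n => hd.
  have : (limg pi <= W)%VS by apply/subvP => _ /memv_imgP [v _ ->].
  move/dimvS; rewrite hd => hle.
  by move: WnF; rewrite eqEdim subvf hle.
- apply/eqP; rewrite -subv0; apply/subvP => v /memv_capP [vW vC]; rewrite memv0.
  by move: vC; rewrite memv_ker piW // scaler_eq0 (negPf nnz).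
Qed.

Variable x : E.
Hypothesis HK : forall M : Emod E, simple_Emod M -> Eact M x = 0.

Lemma killS (S : {vspace E}) : stableE S -> S != 0%VS -> minimalE S ->
  forall v, v \in S -> x * v = 0.
Proof.
move=> stS Snz mS v vS.
have /lfunP /(_ (vsproj S v)) := HK (subMod_simple stS Snz mS).
rewrite /= subActE zero_lfunE vsprojK // => h'.
by rewrite -(vsprojK (stS x v vS)) h'.
Qed.

Lemma inj_main : x = 0.
Proof.
suff : forall v, x * v = 0 by move/(_ 1); rewrite mulr1.
suff key : forall U, stableE U -> (forall v, v \in U -> x * v = 0) ->
    forall v, x * v = 0.
  apply: (key 0%VS).
    by move=> e v; rewrite memv0 => /eqP ->; rewrite mulr0 mem0v.
  by move=> v; rewrite memv0 => /eqP ->; rewrite mulr0.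
move=> U0.
have [k] := ubnP (\dim {:E} - \dim U0)%N; elim: k U0 => // k IH U hk stU kU.
case: (eqVneq U fullv) => [UF|UnF].
  by move=> v; apply: kU; rewrite UF memvf.
have [C [stC Cnz capUC]] := complement stU UnF.
have [S [stS Snz sSC mS]] := minimal_exists stC Cnz.
have kS := killS stS Snz mS.
have capUS : (U :&: S = 0)%VS.
  by apply/eqP; rewrite -subv0 -capUC capvS.
apply: (IH (U + S)%VS).
- have h1 := dimv_disjoint_sum capUS.
  have h2 : (\dim (U + S) <= \dim {:E})%N by apply: dimvS; apply: subvf.
  have h3 : (0 < \dim S)%N by rewrite lt0n dimv_eq0.
  lia.
- move=> e v /memv_addP [u uU [s sS ->]].
  by rewrite mulrDr memv_add ?stU ?stS.
- move=> v /memv_addP [u uU [s sS ->]].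
  by rewrite mulrDr kU // kS // addr0.
Qed.
End Inj.

Set Implicit Arguments.

Lemma linB' (K : fieldType) (U W : lmodType K) (f : U -> W) :
  linear f -> forall x y, f (x - y) = f x - f y.
Proof.
move=> fL x y.
pose ff : {linear U -> W} := HB.pack f (GRing.isSemilinear.Build _ _ _ _ f (GRing.semilinear_linear fL)).
exact: (raddfB ff).
Qed.

Lemma lbij_inv (F : fieldType) (V : vectType F) (Q : 'End(V)) : lbij Q ->
  [/\ lbij (Q^-1)%VF, (Q^-1 \o Q = \1)%VF & (Q \o Q^-1 = \1)%VF].
Proof.
move=> [kQ iQ]; have kQ' : lker Q == 0%VS by rewrite kQ.
have kQi : lker (Q^-1)%VF == 0%VS.
  apply/lker0P => a c h.
  by rewrite -(lker0_lfunVK kQ' a) h lker0_lfunVK.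
split.
- by split; [apply/eqP | apply: lker0_limgf].
- exact: lker0_compVf.
- exact: lker0_compfV.
Qed.

Unset Implicit Arguments.
Section Main.
Variables (F : closedFieldType) (charF0 : [pchar F] =i pred0)
  (gT : finGroupType) (E : falgType F)
  (Ew : gT -> {vspace E})
  (dimEw : forall w, \dim (Ew w) = 1%N)
  (sumEw : (\sum_(w : gT) Ew w)%VS = fullv)
  (mulEw : forall w y, (Ew w * Ew y)%VS = Ew (w * y)%g)
  (b : gT -> E) (bE : forall w, b w \in Ew w) (bnz : forall w, b w != 0)
  (iota : {lrmorphism E -> E}) (iotainv : E -> E)
  (iotaK : cancel iota iotainv) (iotainvK : cancel iotainv iota)
  (r r' : nat)
  (V : 'I_r' -> Emod E)
  (Vsimple : forall i, simple_Emod (V i))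
  (Vnoniso : forall i j, Emod_iso (V i) (V j) -> i = j)
  (Vall : forall M : Emod E, simple_Emod M -> exists i, Emod_iso M (V i))
  (Vtw : forall i : 'I_r', (i < r)%N <-> exists j : 'End(V i), twisting iota j).

Local Notation rho i := (Eact (V i)).
Local Notation n := (#|gT|%:R : F).
Local Notation d i := ((\dim {:V i})%:R : F).

Lemma rhoL i : linear (rho i). Proof. by case: (Vsimple i) => [[]]. Qed.
Lemma rho1 i : rho i 1 = \1%VF. Proof. by case: (Vsimple i) => [[]]. Qed.
Lemma rhoM i x y : rho i (x * y) = (rho i x \o rho i y)%VF.
Proof. by case: (Vsimple i) => [[]]. Qed.
Lemma rhoS i : stab_simple (rho i). Proof. by case: (Vsimple i). Qed.
Lemma dpos i : (0 < \dim {:V i})%N. Proof. by case: (Vsimple i). Qed.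

Lemma nnz : n != 0.
Proof.
have /pcharf0P h := charF0; rewrite h -lt0n.
by apply/card_gt0P; exists 1%g.
Qed.
Lemma dnz i : d i != 0.
Proof. by have /pcharf0P h := charF0; rewrite h -lt0n dpos. Qed.

Lemma bU y : b y \is a GRing.unit.
Proof. exact: (b_unit dimEw sumEw mulEw bE bnz). Qed.

Lemma AvH {M N : vectType F} {al : E -> 'End(M)} {be : E -> 'End(N)}
  (alL : linear al) (beL : linear be)
  (alM : forall x y, al (x * y) = (al x \o al y)%VF)
  (beM : forall x y, be (x * y) = (be x \o be y)%VF) g e :
  (be e \o Av b al be g = Av b al be g \o al e)%VF.
Proof. exact: (Av_hom dimEw sumEw mulEw bE bnz alL beL alM beM). Qed.

Lemma AvZero i j (g : 'Hom(V i, V j)) : i != j -> Av b (rho i) (rho j) g = 0.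
Proof.
move=> nij.
have hQ e := AvH (rhoL i) (rhoL j) (rhoM i) (rhoM j) g e.
have [//|bij] := schur (rhoS i) (rhoS j) hQ.
have : Emod_iso (V i) (V j) by exists (Av b (rho i) (rho j) g); split => // e; rewrite hQ.
by move/Vnoniso/eqP; rewrite (negPf nij).
Qed.

Lemma AvScal i (g : 'End(V i)) :
  Av b (rho i) (rho i) g = (n / d i * vtrace g) *: \1%VF.
Proof.
have hQ e := AvH (rhoL i) (rhoL i) (rhoM i) (rhoM i) g e.
have [a ha] := schur_scalar (rhoS i) (dpos i) (fun e => hQ e).
have ht : vtrace (Av b (rho i) (rho i) g) = n * vtrace g.
  rewrite /Av vtrace_sum (eq_bigr (fun _ => vtrace g)).
    by rewrite sumr_const mulr_natl.
  move=> y _; rewrite vtrace_comp comp_lfunA -rhoM mulVr ?bU //.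
  by rewrite rho1 comp_lfun1l.
rewrite ha; congr (_ *: _).
move: ht; rewrite ha vtraceZ vtrace1 => ht.
apply: (mulIf (dnz i)); rewrite ht.
have := dnz i; move: (d i) => dd ddz; field.
by rewrite ddz.
Qed.

Definition G1 i j (l : 'I_(\dim {:V i})) (u : V j) : 'Hom(V i, V j) :=
  linfun (fun v : V i => coord (vbasis {:V i}) l v *: u).

Lemma G1E i j l (u : V j) v : G1 i j l u v = coord (vbasis {:V i}) l v *: u.
Proof.
rewrite /G1 linfunE' // => a x y.
by rewrite linearP /= scalerDl scalerA.
Qed.

Lemma vtraceG1 i l (u : V i) : vtrace (G1 i i l u) = coord (vbasis {:V i}) l u.
Proof.
rewrite vtraceE (bigD1 l) //= big1 ?addr0.
  by rewrite G1E linearZ /= coord_free ?(basis_free (vbasisP _)) // eqxx mul1r.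
move=> m nml; rewrite G1E linearZ /= coord_free ?(basis_free (vbasisP _)) //.
by rewrite (negPf nml) mul0r.
Qed.

Lemma OrthU j k e (u : V k) :
  \sum_y vtrace (rho j ((b y)^-1 * e)) *: rho k (b y) u =
  if j == k then (n / d k) *: rho k e u else 0.
Proof.
have step : \sum_y vtrace (rho j ((b y)^-1 * e)) *: rho k (b y) u =
    \sum_(l < \dim {:V j}) Av b (rho j) (rho k) (G1 j k l u)
        (rho j e (vbasis {:V j})`_l).
  under eq_bigr do rewrite vtraceE scaler_suml.
  rewrite exchange_big; apply: eq_bigr => l _.
  rewrite /Av sum_lfunE; apply: eq_bigr => y _.
  by rewrite !comp_lfunE G1E linearZ /= rhoM comp_lfunE.
rewrite step; case: (eqVneq j k) => [ejk|njk].
  subst k.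
  under eq_bigr do rewrite AvScal scale_lfunE id_lfunE vtraceG1 -scalerA.
  rewrite -scaler_sumr; congr (_ *: _).
  rewrite {2}(coord_vbasis (memvf u)) linear_sum; apply: eq_bigr => l _.
  by rewrite linearZ.
by rewrite big1 // => l _; rewrite AvZero // zero_lfunE.
Qed.

Definition P (e : E) : F := n^-1 * \sum_(j < r') d j * vtrace (rho j e).

Lemma PD u v : P (u + v) = P u + P v.
Proof.
rewrite /P -mulrDr -big_split /=.
rewrite (eq_bigr (fun j : 'I_r' => d j * vtrace (rho j u) + d j * vtrace (rho j v))) // => j _.
by rewrite (linD' (rhoL j)) vtraceD mulrDr.
Qed.

Lemma PZ a u : P (a *: u) = a * P u.
Proof.
rewrite /P [RHS]mulrCA [in RHS]mulr_sumr.
rewrite (eq_bigr (fun j : 'I_r' => a * (d j * vtrace (rho j u)))) // => j _.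
by rewrite (linZ' (rhoL j)) vtraceZ mulrCA.
Qed.

Lemma kill_all x : (forall k, rho k x = 0) -> x = 0.
Proof.
move=> hk; apply: (inj_main dimEw sumEw mulEw bE bnz nnz).
move=> M sM; have [i [f [[kf _] hf]]] := Vall M sM.
apply/lfunP => v; rewrite zero_lfunE.
have : f (Eact M x v) = f 0.
  by rewrite linear0 -comp_lfunE hf comp_lfunE hk zero_lfunE.
by move/eqP: kf => /lker0P; apply.
Qed.

Lemma frame e : \sum_y P ((b y)^-1 * e) *: b y = e.
Proof.
apply/eqP; rewrite -subr_eq0; apply/eqP; apply: kill_all => k.
rewrite (linB' (rhoL k)) (lin_sum' _ _ _ (rhoL k)); apply/lfunP => u.
rewrite add_lfunE opp_lfunE sum_lfunE zero_lfunE; apply/eqP; rewrite subr_eq0; apply/eqP.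
transitivity (n^-1 *: \sum_j d j *: \sum_y
    vtrace (rho j ((b y)^-1 * e)) *: rho k (b y) u).
  rewrite [RHS]scaler_sumr; under [RHS]eq_bigr do rewrite !scaler_sumr.
  rewrite [RHS]exchange_big /=; apply: eq_bigr => y _.
  rewrite (linZ' (rhoL k)) scale_lfunE /P -scalerA scaler_suml scaler_sumr.
  by apply: eq_bigr => j _; rewrite [d j *: _]scalerA.
under eq_bigr do rewrite OrthU.
rewrite (bigD1 k) //= eqxx big1 ?addr0 => [|j njk]; last by rewrite (negPf njk) scaler0.
rewrite !scalerA [X in X *: _](_ : _ = 1) ?scale1r //.
have := dnz k; have := nnz; move: (d k) (n) => dd nn ddz nnz'; field.
by rewrite ddz nnz'.
Qed.

Section Twist.
Variables (iotai : forall i : 'I_r', 'End(V i))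
  (iotaiP : forall i : 'I_r', (i < r)%N -> twisting iota (iotai i)).

Lemma iiL : linear iotainv.
Proof. exact: (can2_linear iotaK iotainvK). Qed.
Lemma iiM x y : iotainv (x * y) = iotainv x * iotainv y.
Proof. by rewrite -{1}(iotainvK x) -{1}(iotainvK y) -rmorphM iotaK. Qed.

Definition al j (e : E) : 'End(V j) := rho j (iotainv e).
Lemma alL j : linear (al j).
Proof. by move=> a x y; rewrite /al iiL (rhoL j). Qed.
Lemma alM j x y : al j (x * y) = (al j x \o al j y)%VF.
Proof. by rewrite /al iiM rhoM. Qed.
Lemma alS j : stab_simple (al j).
Proof. move=> U hU; apply: (rhoS j) => e; have := hU (iota e); by rewrite /al iotaK. Qed.

Lemma AvTw (j : 'I_r') (hj : (j < r)%N) (g : 'End(V j)) :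
  Av b (rho j) (al j) g = (n / d j * vtrace (iotai j \o g)%VF) *: (iotai j)^-1%VF.
Proof.
have [[kJ iJ] tw] := iotaiP j hj.
have [_ JVJ JJV] := lbij_inv (conj kJ iJ).
have alE e : al j e = ((iotai j)^-1 \o rho j e \o iotai j)%VF.
  by rewrite /al -comp_lfunA -[in RHS](iotainvK e) -tw comp_lfunA JVJ comp_lfun1l.
have -> : Av b (rho j) (al j) g = ((iotai j)^-1 \o Av b (rho j) (rho j) (iotai j \o g))%VF.
  by rewrite /Av comp_sumr; apply: eq_bigr => y _; rewrite alE !comp_lfunA.
by rewrite AvScal -comp_lfunZr comp_lfun1r.
Qed.

Lemma AvTw0 (j : 'I_r') (hj : ~~ (j < r)%N) (g : 'End(V j)) : Av b (rho j) (al j) g = 0.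
Proof.
have hQ e := AvH (rhoL j) (alL j) (rhoM j) (alM j) g e.
have [//|bQ] := schur (rhoS j) (alS j) hQ.
set Q := Av b (rho j) (al j) g in hQ bQ.
have [bQ' QVQ QQV] := lbij_inv bQ.
have : (j < r)%N.
  apply/Vtw; exists (Q^-1)%VF; split => // e.
  have h : (rho j e \o Q = Q \o rho j (iota e))%VF.
    by have := hQ (iota e); rewrite /al iotaK.
  rewrite -[LHS]comp_lfun1r -QQV comp_lfunA -(comp_lfunA _ (rho j e)) h.
  by rewrite comp_lfunA QVQ comp_lfun1l.
by rewrite (negPf hj).
Qed.

Lemma traceAv (j : 'I_r') (X Y : E) :
  \sum_y vtrace (rho j ((b y)^-1 * (X * iotainv (b y) * Y))) =
  vtrace (Av b (rho j) (al j) (rho j Y) \o rho j X)%VF.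
Proof.
rewrite /Av comp_suml vtrace_sum; apply: eq_bigr => y _.
rewrite !rhoM vtrace_comp -!comp_lfunA vtrace_comp !comp_lfunA.
done.
Qed.

Lemma main_trace (X Y : E) :
  \sum_(i < r' | (i < r)%N)
     vtrace (rho i Y \o iotai i)%VF * vtrace ((iotai i)^-1%VF \o rho i X)%VF
  = vtrace (linfun (fun e : E => X * iotainv e * Y)).
Proof.
have kL : linear (fun e : E => X * iotainv e * Y).
  by move=> a u v; rewrite iiL mulrDr mulrDl -scalerAr -scalerAl.
symmetry; rewrite (vtrace_frame (x := b) (phi := fun y e => P ((b y)^-1 * e))); first last.
- exact: frame.
- by move=> y a u; rewrite -scalerAr PZ.
- by move=> y u v; rewrite mulrDr PD.
under eq_bigr do rewrite linfunE' //.
rewrite /P -mulr_sumr exchange_big /=.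
under eq_bigr do rewrite -mulr_sumr traceAv.
rewrite mulr_sumr (bigID (fun j : 'I_r' => (j < r)%N)) /= [X in _ + X]big1 ?addr0.
  apply: eq_bigr => j hj.
  rewrite AvTw // -comp_lfunZl vtraceZ (vtrace_comp (iotai j)).
  have := dnz j; have := nnz; move: (d j) (n) => dd nn ddz nnz'; field.
  by rewrite ddz nnz'.
by move=> j hj; rewrite AvTw0 // comp_lfun0l vtrace0 !mulr0.
Qed.
End Twist.
End Main.

End H.
Import H.
Unset Implicit Arguments. Set Strict Implicit. Set Printing Implicit Defensive.

Theorem mainTheorem14
  (F : closedFieldType) (charF0 : [pchar F] =i pred0)
  (gT : finGroupType)
  (E : falgType F)
  (Ew : gT -> {vspace E})
  (dimEw : forall w, \dim (Ew w) = 1%N)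
  (sumEw : (\sum_(w : gT) Ew w)%VS = fullv)
  (dirEw : directv (\sum_(w : gT) Ew w))
  (mulEw : forall w y, (Ew w * Ew y)%VS = Ew (w * y)%g)
  (b : gT -> E) (bE : forall w, b w \in Ew w) (bnz : forall w, b w != 0)
  (iota : {lrmorphism E -> E}) (iotainv : E -> E)
  (iotaK : cancel iota iotainv) (iotainvK : cancel iotainv iota)
  (r r' : nat) (le_rr' : (r <= r')%N)
  (V : 'I_r' -> Emod E)
  (Vsimple : forall i, simple_Emod (V i))
  (Vnoniso : forall i j, Emod_iso (V i) (V j) -> i = j)
  (Vall : forall M : Emod E, simple_Emod M -> exists i, Emod_iso M (V i))
  (Vtw : forall i : 'I_r', (i < r)%N <-> exists j : 'End(V i), twisting iota j)
  (iotai : forall i : 'I_r', 'End(V i))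
  (iotaiP : forall i : 'I_r', (i < r)%N -> twisting iota (iotai i)) :
  forall w w' : gT,
    \sum_(i < r' | (i < r)%N)
       vtrace (Eact (V i) (b w) \o iotai i)%VF
       * vtrace ((iotai i)^-1%VF \o Eact (V i) (b w')^-1%R)%VF
    = vtrace (linfun (fun e : E => (b w')^-1 * iotainv e * b w)).
Proof.
move=> w w'.
exact: (main_trace F charF0 gT E Ew dimEw sumEw mulEw b bE bnz iota iotainv
  iotaK iotainvK r r' V Vsimple Vnoniso Vall Vtw iotai iotaiP ((b w')^-1) (b w)).
Qed.
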